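(* For every $\epsilon>0$ there is $\eta>0$ such that for all sufficiently large $n$ the following holds. If $H$ is a $4$-uniform hypergraph on $n$ vertices containing no copy of ${\cal C}^{(4)}_3$ with $e(H)>b(n)-\eta n^4$, then there is a partition $V(H)=V_1\cup V_2$ such that all but at most $\epsilon n^4$ of the $4$-element subsets of $V(H)$ are correct with respect to this partition.
   Context: ${\cal C}^{(4)}_3$ is the $4$-uniform hypergraph with vertices $a,b,c,d,e,f$ and the three edges $abcd, abef, cdef$. For $n$ and $t$ with $n/2+t$ a nonnegative integer and $|t|\le n/2$, ${\cal B}(n,t)$ is the $4$-uniform hypergraph on $n$ vertices partitioned into parts of sizes $n/2+t$ and $n/2-t$ whose edges are all $4$-sets having exactly $1$ vertex in one part and $3$ in the other; $b(n)$ is the maximum over admissible $t$ of the number of edges of ${\cal B}(n,t)$. Given a partition $V(H)=V_1\cup V_2$, a $4$-set is good if it has $1$ point in one of $V_1,V_2$ and $3$ in the other, and bad otherwise; it is correct (with respect to $H$) if it is either a good edge of $H$ or a bad non-edge of $H$, and incorrect otherwise. *)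

(* Defs.v *)
From HB Require Import structures.
From mathcomp Require Import all_boot all_order all_algebra.
From mathcomp Require Import reals.
Set Implicit Arguments. Unset Strict Implicit. Unset Printing Implicit Defensive.

Definition uniform4 (n : nat) (E : {set {set 'I_n}}) : Prop :=
  forall e, e \in E -> #|e| = 4.

Definition contains_C3 (n : nat) (E : {set {set 'I_n}}) : Prop :=
  exists (a b c d e f : 'I_n),
    uniq [:: a; b; c; d; e; f] /\
    [set a; b; c; d] \in E /\ [set a; b; e; f] \in E /\ [set c; d; e; f] \in E.

(* Number of edges of B(n,t) with parts of sizes k = n/2 + t and n - k. *)
Definition edgesB (n k : nat) : nat := k * 'C(n - k, 3) + 'C(k, 3) * (n - k).

(* b(n): maximum over admissible t, i.e. over part sizes k = 0..n. *)
Definition bmax (n : nat) : nat := \max_(k < n.+1) edgesB n k.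

(* Partition V = V1 ∪ V2 with V2 = ~: V1; a 4-set is good if it has 1 or 3
   points in V1. *)
Definition good (n : nat) (V1 : {set 'I_n}) (S : {set 'I_n}) : bool :=
  (#|S :&: V1| == 1) || (#|S :&: V1| == 3).

Definition correct (n : nat) (E : {set {set 'I_n}}) (V1 S : {set 'I_n}) : bool :=
  ((S \in E) && good V1 S) || ((S \notin E) && ~~ good V1 S).

Definition incorrect_sets (n : nat) (E : {set {set 'I_n}}) (V1 : {set 'I_n})
  : {set {set 'I_n}} :=
  [set S : {set 'I_n} | (#|S| == 4) && ~~ correct E V1 S].

(* Main.v *)
Require Import Defs.
From HB Require Import structures.
From mathcomp Require Import all_boot all_order all_algebra.
From mathcomp Require Import reals.
From mathcomp Require Import zify.
From mathcomp Require Import ring lra.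
Set Implicit Arguments. Unset Strict Implicit. Unset Printing Implicit Defensive.

Lemma bin3 m : 'C(m, 3) * 6 = m * (m - 1) * (m - 2).
Proof.
case: m => [|[|[|m]]] //.
have := bin_ffact m.+3 3; rewrite !ffactnS ffactn0 /= => ->.
rewrite !subSS !subn0; lia.
Qed.

Lemma cube_lb m : m ^ 3 <= m * (m - 1) * (m - 2) + 3 * m ^ 2.
Proof.
case: m => [|[|[|m]]] //.
rewrite !subSS !subn0.
have -> : m.+3 ^ 3 = m.+3 * m.+2 * m.+1 + 3 * m.+3 ^ 2 - 2 * m.+3 by nia.
lia.
Qed.

Lemma poly_a a : (2 * a) ^ 4 + 24 * (a * a ^ 2) + 24 * (a ^ 2 * a)
   <= 8 * (a * a ^ 3) + 8 * (a ^ 3 * a) + 6 * (2 * a) ^ 3 + (2 * a) ^ 2.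
Proof.
have -> : 8 * (a * a ^ 3) + 8 * (a ^ 3 * a) + 6 * (2 * a) ^ 3 + (2 * a) ^ 2
  = (2 * a) ^ 4 + 24 * (a * a ^ 2) + 24 * (a ^ 2 * a) + 4 * a ^ 2 by ring.
exact: leq_addr.
Qed.

Lemma poly_b a : (2 * a + 1) ^ 4 + 24 * (a * (a+1) ^ 2) + 24 * (a ^ 2 * (a+1))
   <= 8 * (a * (a+1) ^ 3) + 8 * (a ^ 3 * (a+1)) + 6 * (2 * a + 1) ^ 3 + (2 * a + 1) ^ 2.
Proof.
have -> : 8 * (a * (a+1) ^ 3) + 8 * (a ^ 3 * (a+1)) + 6 * (2 * a + 1) ^ 3 + (2 * a + 1) ^ 2
  = (2 * a + 1) ^ 4 + 24 * (a * (a+1) ^ 2) + 24 * (a ^ 2 * (a+1)) + (4 * a ^ 2 + 16 * a + 6) by ring.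
exact: leq_addr.
Qed.

Lemma bmax_lb n : n ^ 4 <= 48 * bmax n + 6 * n ^ 3 + n ^ 2.
Proof.
have H : edgesB n n./2 <= bmax n.
  rewrite /bmax; have := @leq_bigmax _ (fun k : 'I_n.+1 => edgesB n k) (@Ordinal n.+1 n./2 _); apply.
  by rewrite ltnS -divn2 leq_div.
suff H2 : n ^ 4 <= 48 * edgesB n n./2 + 6 * n ^ 3 + n ^ 2 by lia.
rewrite /edgesB.
set a := n./2; set b := n - a.
have E48 : 48 * (a * 'C(b, 3) + 'C(a, 3) * b)
    = 8 * (a * ('C(b, 3) * 6) + ('C(a, 3) * 6) * b) by lia.
rewrite E48 !bin3.
have F1 := leq_mul (leqnn a) (cube_lb b).
have F2 := leq_mul (cube_lb a) (leqnn b).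
rewrite mulnDr in F1; rewrite mulnDl in F2.
have [Hn|Hn] : n = 2 * a \/ n = 2 * a + 1.
  rewrite /a; case/boolP: (odd n) => Ho.
    by right; rewrite -[n in LHS]odd_double_half Ho -muln2; lia.
  by left; rewrite -[n in LHS]odd_double_half (negbTE Ho) -muln2; lia.
- have Hb : b = a by rewrite /b Hn; lia.
  rewrite Hb in F1 F2 *; rewrite Hn.
  have := poly_a a.
  move: F1 F2; move: (a * (a * (a - 1) * (a - 2))) (a * (a - 1) * (a - 2) * a) => X Y.
  have e1 : a * (3 * a ^ 2) = 3 * (a * a ^ 2) by ring.
  have e2 : 3 * a ^ 2 * a = 3 * (a ^ 2 * a) by ring.
  rewrite e1 e2.
  move: (a * a ^ 3) (a ^ 3 * a) (a * a ^ 2) (a ^ 2 * a) ((2 * a) ^ 4) ((2 * a) ^ 3) ((2*a)^2) => p1 p2 p3 p4 p5 p6 p7.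
  lia.
- have Hb : b = a + 1 by rewrite /b Hn; lia.
  rewrite Hb in F1 F2 *; rewrite Hn.
  have := poly_b a.
  move: F1 F2; move: (a * ((a + 1) * (a + 1 - 1) * (a + 1 - 2))) (a * (a - 1) * (a - 2) * (a + 1)) => X Y.
  have e1 : a * (3 * (a + 1) ^ 2) = 3 * (a * (a + 1) ^ 2) by ring.
  have e2 : 3 * a ^ 2 * (a + 1) = 3 * (a ^ 2 * (a + 1)) by ring.
  rewrite e1 e2.
  move: (a * (a + 1) ^ 3) (a ^ 3 * (a + 1)) (a * (a + 1) ^ 2) (a ^ 2 * (a + 1)) ((2 * a + 1) ^ 4) ((2 * a + 1) ^ 3) ((2 * a + 1) ^ 2) => p1 p2 p3 p4 p5 p6 p7.
  lia.
Qed.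

Section Main.
Variable n : nat.
Variable E : {set {set 'I_n}}.
Hypothesis HC : ~ contains_C3 E.
Local Notation V := 'I_n.

Definition D4 (a b c d : V) := uniq [:: a; b; c; d].
Definition e4 (a b c d : V) := [set a; b; c; d] \in E.
Definition S4 (F : V -> V -> V -> V -> nat) :=
  \sum_(a < n) \sum_(b < n) \sum_(c < n) \sum_(d < n) F a b c d.

Lemma D4_perm a b c d a' b' c' d' :
  perm_eq [:: a; b; c; d] [:: a'; b'; c'; d'] -> D4 a b c d = D4 a' b' c' d'.
Proof. exact: perm_uniq. Qed.

Lemma e4_perm a b c d a' b' c' d' :
  perm_eq [:: a; b; c; d] [:: a'; b'; c'; d'] -> e4 a b c d = e4 a' b' c' d'.
Proof.
move=> Hp; rewrite /e4; congr (_ \in E); apply/setP => x.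
have := perm_mem Hp x; by rewrite !inE -!orbA => ->.
Qed.

Ltac permt := apply/permP => P /=; lia.

Lemma D4_swap a b c d : D4 a b c d = D4 c d a b.
Proof. by apply: D4_perm; permt. Qed.
Lemma e4_swap a b c d : e4 a b c d = e4 c d a b.
Proof. by apply: e4_perm; permt. Qed.
Lemma D4_23 a b c d : D4 a b c d = D4 a c b d.
Proof. by apply: D4_perm; permt. Qed.
Lemma e4_23 a b c d : e4 a b c d = e4 a c b d.
Proof. by apply: e4_perm; permt. Qed.
Lemma D4_cyc a b c d : D4 a b c d = D4 a d b c.
Proof. by apply: D4_perm; permt. Qed.
Lemma e4_cyc a b c d : e4 a b c d = e4 a d b c.
Proof. by apply: e4_perm; permt. Qed.
Lemma D4_12 a b c d : D4 a b c d = D4 b a c d.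
Proof. by apply: D4_perm; permt. Qed.
Lemma e4_12 a b c d : e4 a b c d = e4 b a c d.
Proof. by apply: e4_perm; permt. Qed.
Lemma D4_34 a b c d : D4 a b c d = D4 a b d c.
Proof. by apply: D4_perm; permt. Qed.
Lemma e4_34 a b c d : e4 a b c d = e4 a b d c.
Proof. by apply: e4_perm; permt. Qed.

Lemma sum_ex4 (G : V -> V -> V -> V -> nat) :
  \sum_(a < n) \sum_(b < n) \sum_(c < n) \sum_(d < n) G a b c d
  = \sum_(c < n) \sum_(d < n) \sum_(a < n) \sum_(b < n) G a b c d.
Proof.
transitivity (\sum_(a < n) \sum_(c < n) \sum_(b < n) \sum_(d < n) G a b c d).
  by apply: eq_bigr => a _; rewrite exchange_big.
rewrite exchange_big; apply: eq_bigr => c _.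
transitivity (\sum_(a < n) \sum_(d < n) \sum_(b < n) G a b c d).
  by apply: eq_bigr => a _; rewrite exchange_big.
by rewrite exchange_big.
Qed.

Lemma S4_swap F : S4 F = S4 (fun a b c d => F c d a b).
Proof. by rewrite /S4 sum_ex4. Qed.

Lemma S4_23 F : S4 F = S4 (fun a b c d => F a c b d).
Proof. by rewrite /S4; apply: eq_bigr => a _; rewrite exchange_big. Qed.

Lemma S4_cyc F : S4 F = S4 (fun a b c d => F a d b c).
Proof.
rewrite /S4; apply: eq_bigr => a _.
symmetry; transitivity (\sum_(b < n) \sum_(d < n) \sum_(c < n) F a d b c).
  by apply: eq_bigr => b _; rewrite exchange_big.
by rewrite exchange_big.
Qed.

Lemma S4_le F G : (forall a b c d, F a b c d <= G a b c d) -> S4 F <= S4 G.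
Proof.
move=> H; rewrite /S4; apply: leq_sum => a _; apply: leq_sum => b _.
apply: leq_sum => c _; apply: leq_sum => d _; exact: H.
Qed.

Lemma S4_eq F G : (forall a b c d, F a b c d = G a b c d) -> S4 F = S4 G.
Proof. by move=> H; apply/eqP; rewrite eqn_leq; apply/andP; split; apply: S4_le => *; rewrite H. Qed.

Lemma S4_add F G : S4 (fun a b c d => F a b c d + G a b c d) = S4 F + S4 G.
Proof.
rewrite /S4 -big_split; apply: eq_bigr => a _; rewrite -big_split.
apply: eq_bigr => b _; rewrite -big_split; apply: eq_bigr => c _.
by rewrite -big_split.
Qed.

Lemma sum_const_ord (k : nat) : \sum_(i < n) k = n * k.
Proof. by rewrite sum_nat_const card_ord. Qed.

Lemma S4_pair (G : V -> V -> nat) :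
  S4 (fun a b c d => G a b) = n * n * \sum_(a < n) \sum_(b < n) G a b.
Proof.
rewrite /S4 big_distrr; apply: eq_bigr => a _ /=.
rewrite big_distrr; apply: eq_bigr => b _ /=.
by rewrite (eq_bigr (fun _ => n * G a b)) => [|c _]; rewrite ?sum_const_ord // mulnA.
Qed.

Lemma sum_eq1 (v : V) : \sum_(x < n) (x == v : nat) = 1.
Proof.
by rewrite (bigD1 v) //= eqxx big1 // => i /negbTE ->.
Qed.


Lemma card_seqset (s : seq V) : uniq s -> #|[set x in s]| = size s.
Proof. by move=> Hu; rewrite cardsE; apply/card_uniqP. Qed.

Lemma set3E (a b c : V) : [set a; b; c] = [set x in [:: a; b; c]].
Proof. by apply/setP => x; rewrite !inE -!orbA. Qed.
Lemma set4E (a b c d : V) : [set a; b; c; d] = [set x in [:: a; b; c; d]].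
Proof. by apply/setP => x; rewrite !inE -!orbA. Qed.

Lemma card4 a b c d : D4 a b c d -> #|[set a; b; c; d]| = 4.
Proof. by move=> H; rewrite set4E card_seqset. Qed.

Lemma sumX (X : bool) (Y : {set V}) : \sum_(c < n) ((X && (c \in Y)) : nat) = X * #|Y|.
Proof.
case: X; last by rewrite big1.
rewrite mul1n -sum1_card [RHS]big_mkcond /=; apply: eq_bigr => c _; by case: (c \in Y).
Qed.

Lemma cardD_sub (S T : {set V}) : T \subset S -> #|S :\: T| = #|S| - #|T|.
Proof. by move=> H; rewrite cardsD (setIidPr H). Qed.

Lemma D4_last a b c d : D4 a b c d = uniq [:: a; b; c] && (d \notin [:: a; b; c]).
Proof.
rewrite (D4_perm (a' := d) (b' := a) (c' := b) (d' := c)); last by permt.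
by rewrite /D4 [uniq (d :: _)]/= andbC.
Qed.

Section Cnt.
Variable S : {set V}.
Hypothesis HS : #|S| = 4.

Lemma lev_d a b c :
  \sum_(d < n) ((D4 a b c d && ([set a; b; c; d] == S)) : nat)
  = (uniq [:: a; b; c] && (a \in S) && (b \in S) && (c \in S)).
Proof.
case: (boolP (uniq [:: a; b; c] && (a \in S) && (b \in S) && (c \in S))) => H.
  case/andP: (H) => /andP [] /andP [] Hu ha hb hc.
  have Hsub : [set a; b; c] \subset S.
    by apply/subsetP => x; rewrite !inE -!orbA => /or3P [] /eqP ->.
  have Hc3 : #|[set a; b; c]| = 3 by rewrite set3E card_seqset.
  have pw : forall d, (D4 a b c d && ([set a; b; c; d] == S)) = (true && (d \in S :\: [set a; b; c])).
    move=> d /=; rewrite D4_last Hu /=.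
    apply/idP/idP.
      case/andP => HD /eqP HSe.
      rewrite inE -HSe !inE eqxx !orbT andbT.
      by move: HD; rewrite !inE -?orbA.
    rewrite !inE -!orbA => /andP [Hd dS].
    have HD : d \notin [:: a; b; c] by move: Hd; rewrite !inE -?orbA.
    rewrite Hd /= eqEcard card4 ?HS; last by rewrite D4_last Hu.
    rewrite leqnn andbT; apply/subsetP => x; rewrite !inE -?orbA.
    by case/or4P => /eqP ->.
  under eq_bigr => d _ do rewrite pw.
  by rewrite sumX cardD_sub // HS Hc3.
rewrite big1 // => d _; apply/eqP; rewrite eqb0; apply/negP => /andP [HD /eqP HSe].
move/negP: H; apply; rewrite -HSe !inE !eqxx ?orbT /= !andbT.
by move: HD; rewrite D4_last => /andP [] /= /and3P [-> -> _].
Qed.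

Lemma lev_c a b :
  \sum_(c < n) ((uniq [:: a; b; c] && (a \in S) && (b \in S) && (c \in S)) : nat)
  = 2 * ((a != b) && (a \in S) && (b \in S)).
Proof.
have pw : forall c, (uniq [:: a; b; c] && (a \in S) && (b \in S) && (c \in S))
   = (((a != b) && (a \in S) && (b \in S)) && (c \in S :\: [set a; b])).
  move=> c; rewrite /= !inE (eq_sym c a) (eq_sym c b).
  by case: (a == b); case: (a == c); case: (b == c); case: (a \in S); case: (b \in S); case: (c \in S).
under eq_bigr => c _ do rewrite pw.
rewrite sumX; case: (boolP ((a != b) && (a \in S) && (b \in S))) => // /andP [] /andP [] hab ha hb.
rewrite cardD_sub ?HS ?cards2 ?hab //.
by apply/subsetP => x; rewrite !inE => /orP [] /eqP ->.
Qed.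

Lemma lev_b a :
  \sum_(b < n) (((a != b) && (a \in S) && (b \in S)) : nat) = 3 * (a \in S).
Proof.
have pw : forall b, ((a != b) && (a \in S) && (b \in S))
   = ((a \in S) && (b \in S :\: [set a])).
  move=> b; rewrite !inE (eq_sym b a).
  by case: (a == b); case: (a \in S); case: (b \in S).
under eq_bigr => b _ do rewrite pw.
rewrite sumX; case: (boolP (a \in S)) => // ha.
by rewrite cardD_sub ?HS ?cards1 // sub1set.
Qed.

Lemma cnt24 : S4 (fun a b c d => (D4 a b c d && ([set a; b; c; d] == S)) : nat) = 24.
Proof.
rewrite /S4.
under eq_bigr => a _ do under eq_bigr => b _ do under eq_bigr => c _ do rewrite lev_d.
under eq_bigr => a _ do under eq_bigr => b _ do rewrite lev_c.
under eq_bigr => a _ do rewrite -big_distrr /= lev_b.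
rewrite -big_distrr /= -big_distrr /=.
have -> : \sum_(i < n) ((i \in S) : nat) = 4.
  by rewrite -HS -sum1_card [RHS]big_mkcond /=; apply: eq_bigr => c _; case: (c \in S).
done.
Qed.

End Cnt.

Definition M := S4 (fun a b c d => (D4 a b c d && e4 a b c d) : nat).

Lemma sum_in_eq (F : {set {set V}}) (T : {set V}) : \sum_(S in F) ((T == S) : nat) = (T \in F).
Proof.
case: (boolP (T \in F)) => H.
  rewrite (bigD1 T) //= eqxx big1 // => S /andP [_ /negbTE].
  by rewrite eq_sym => ->.
rewrite big1 // => S HS; case: eqP => // HT; subst; by rewrite HS in H.
Qed.

Lemma S4_sum (I : finType) (P : pred I) (G : I -> V -> V -> V -> V -> nat) :
  S4 (fun a b c d => \sum_(i | P i) G i a b c d) = \sum_(i | P i) S4 (G i).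
Proof.
rewrite /S4 [RHS]exchange_big; apply: eq_bigr => a _.
rewrite [RHS]exchange_big; apply: eq_bigr => b _.
rewrite [RHS]exchange_big; apply: eq_bigr => c _.
by rewrite [RHS]exchange_big.
Qed.

Lemma S4_count (F : {set {set V}}) : (forall S, S \in F -> #|S| = 4) ->
  S4 (fun a b c d => (D4 a b c d && ([set a; b; c; d] \in F)) : nat) = 24 * #|F|.
Proof.
move=> HU.
have pw : forall a b c d, ((D4 a b c d && ([set a; b; c; d] \in F)) : nat)
   = \sum_(S in F) ((D4 a b c d && ([set a; b; c; d] == S)) : nat).
  move=> a b c d; case: (D4 a b c d) => /=; last by rewrite big1.
  by rewrite sum_in_eq.
rewrite (S4_eq pw) S4_sum.
rewrite (eq_bigr (fun _ => 24)); last by move=> S HS; apply: cnt24; apply: HU.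
by rewrite sum_nat_const mulnC.
Qed.

Lemma M_eq (HU : uniform4 E) : M = 24 * #|E|.
Proof. exact: S4_count. Qed.

Definition S2 (G : V -> V -> nat) := \sum_(a < n) \sum_(b < n) G a b.
Definition deg a b := \sum_(c < n) \sum_(d < n) ((D4 a b c d && e4 a b c d) : nat).
Definition Pn := S2 (fun a b => (a != b) : nat).

Lemma S4_prod (G H : V -> V -> nat) :
  S4 (fun a b c d => G a b * H c d) = S2 G * S2 H.
Proof.
rewrite /S4 /S2 big_distrl; apply: eq_bigr => a _ /=.
rewrite big_distrl; apply: eq_bigr => b _ /=.
rewrite big_distrr; apply: eq_bigr => c _ /=.
by rewrite big_distrr.
Qed.

Lemma S4_pull (G : V -> V -> nat) (H : V -> V -> V -> V -> nat) :
  S4 (fun a b c d => G a b * H a b c d) = S2 (fun a b => G a b * \sum_(c < n) \sum_(d < n) H a b c d).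
Proof.
rewrite /S4 /S2; apply: eq_bigr => a _; apply: eq_bigr => b _.
rewrite big_distrr; apply: eq_bigr => c _ /=.
by rewrite big_distrr.
Qed.

Lemma S2_le F G : (forall a b, F a b <= G a b) -> S2 F <= S2 G.
Proof. move=> H; apply: leq_sum => a _; apply: leq_sum => b _; exact: H. Qed.
Lemma S2_eq F G : (forall a b, F a b = G a b) -> S2 F = S2 G.
Proof. by move=> H; apply: eq_bigr => a _; apply: eq_bigr => b _; rewrite H. Qed.
Lemma S2_add F G : S2 (fun a b => F a b + G a b) = S2 F + S2 G.
Proof. by rewrite /S2 -big_split; apply: eq_bigr => a _; rewrite -big_split. Qed.
Lemma S2_mulr F k : S2 (fun a b => F a b * k) = S2 F * k.
Proof. by rewrite /S2 big_distrl; apply: eq_bigr => a _; rewrite big_distrl. Qed.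

Ltac splitall := repeat match goal with H : is_true (_ && _) |- _ => case/andP: H => ? ? end.

Section Mantel.
Variables p q : V.
Hypothesis Hmax : forall a b, deg a b <= deg p q.

Definition f a b := D4 p q a b && e4 p q a b.

Lemma f_neq a b : f a b -> a != b.
Proof. by case/andP; rewrite /D4 /= !inE => H _; splitall. Qed.

Lemma indep a b c d : D4 a b c d -> e4 a b c d -> f a b -> f c d -> False.
Proof.
move=> H1 H2 /andP [H3 H4] /andP [H5 H6]; apply: HC.
exists p, q, a, b, c, d; split; last by [].
move: H1 H3 H5; rewrite /D4 /= !inE !negb_or => H1 H3 H5.
splitall; repeat (apply/andP; split) => //.
Qed.

Definition Def a b c d :=
  (e4 a b c d && ~~ f a b && ~~ f c d) || (~~ e4 a b c d && (f a b != f c d)).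

Lemma ND a b c d : D4 a b c d -> ~~ Def a b c d -> e4 a b c d = f a b (+) f c d.
Proof.
move=> HD; have := indep HD; rewrite /Def.
by case: (e4 a b c d); case: (f a b); case: (f c d) => // H; exfalso; apply: H.
Qed.

Definition Delta := deg p q.
Definition Dn := S4 (fun a b c d => (D4 a b c d && Def a b c d) : nat).

Lemma Delta_S2 : Delta = S2 (fun a b => f a b : nat).
Proof. by []. Qed.

Lemma Delta_le : Delta <= Pn.
Proof. by rewrite Delta_S2; apply: S2_le => a b; case: (boolP (f a b)) => // /f_neq ->. Qed.

Lemma compl_cnt : S2 (fun a b => ((a != b) && ~~ f a b) : nat) = Pn - Delta.
Proof.
have : Pn = Delta + S2 (fun a b => ((a != b) && ~~ f a b) : nat).
  rewrite Delta_S2 -S2_add; apply: S2_eq => a b.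
  by case: (boolP (f a b)) => [/f_neq -> //|]; case: (a != b).
lia.
Qed.

Lemma deg_diag a : deg a a = 0.
Proof. by rewrite /deg big1 // => c _; rewrite big1 // => d _; rewrite /D4 /= !inE eqxx. Qed.

Lemma mantel : 2 * Dn + 6 * M <= 12 * (Delta * (Pn - Delta)).
Proof.
set Y := S4 (fun a b c d => (D4 a b c d && e4 a b c d && f a b) : nat).
set X := S4 (fun a b c d => (D4 a b c d && e4 a b c d && ~~ f a b) : nat).
set Y' := S4 (fun a b c d => (D4 a b c d && e4 a b c d && ~~ f a b && f c d) : nat).
set W := S4 (fun a b c d => (D4 a b c d && e4 a b c d && ~~ f a b && ~~ f c d) : nat).
set Z1 := S4 (fun a b c d => (D4 a b c d && ~~ e4 a b c d && f a b && ~~ f c d) : nat).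
set Z2 := S4 (fun a b c d => (D4 a b c d && ~~ e4 a b c d && ~~ f a b && f c d) : nat).
set Tt := S4 (fun a b c d => (D4 a b c d && f a b && ~~ f c d) : nat).
set K := Delta * (Pn - Delta).
have hM : M = Y + X.
  rewrite /M -S4_add; apply: S4_eq => a b c d.
  by case: (D4 a b c d); case: (e4 a b c d); case: (f a b).
have hY1 : Y = S4 (fun a b c d => (D4 a b c d && e4 a b c d && f a b && ~~ f c d) : nat).
  apply: S4_eq => a b c d; have := @indep a b c d.
  by case: (D4 a b c d); case: (e4 a b c d); case: (f a b); case: (f c d) => // H; exfalso; apply: H.
have hY : Y = Y'.
  rewrite hY1 S4_swap; apply: S4_eq => a b c d; rewrite -D4_swap -e4_swap.
  by case: (D4 a b c d); case: (e4 a b c d); case: (f a b); case: (f c d).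
have hX : X = Y' + W.
  rewrite -S4_add; apply: S4_eq => a b c d.
  by case: (D4 a b c d); case: (e4 a b c d); case: (f a b); case: (f c d).
have hXle : X <= K.
  have -> : X = S2 (fun a b => (~~ f a b) * deg a b).
    rewrite /X -S4_pull; apply: S4_eq => a b c d.
    by case: (D4 a b c d); case: (e4 a b c d); case: (f a b).
  rewrite /K mulnC -compl_cnt -S2_mulr; apply: S2_le => a b.
  case: (eqVneq a b) => [->|hab]; first by rewrite deg_diag muln0.
  by case: (f a b) => //=; rewrite !mul1n; apply: Hmax.
have hT : Tt = Z1 + Y.
  rewrite hY1 -S4_add; apply: S4_eq => a b c d.
  by case: (D4 a b c d); case: (e4 a b c d); case: (f a b); case: (f c d).
have hTle : Tt <= K.
  apply: (@leq_trans (S4 (fun a b c d => (f a b : nat) * ((c != d) && ~~ f c d)))).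
    apply: S4_le => a b c d; case: (boolP (D4 a b c d)) => HD //=.
    have hcd : c != d by move: HD; rewrite /D4 /= !inE !negb_or => H; splitall.
    by rewrite hcd; case: (f a b); case: (f c d).
  by rewrite S4_prod -Delta_S2 compl_cnt.
have hZ : Z2 = Z1.
  rewrite /Z2 S4_swap; apply: S4_eq => a b c d; rewrite -D4_swap -e4_swap.
  by case: (D4 a b c d); case: (e4 a b c d); case: (f a b); case: (f c d).
have hD : Dn = W + Z1 + Z2.
  rewrite -!S4_add; apply: S4_eq => a b c d; rewrite /Def.
  by case: (D4 a b c d); case: (e4 a b c d); case: (f a b); case: (f c d).
lia.
Qed.

Lemma mantel2 : 2 * Dn + 6 * M <= 3 * Pn ^ 2.
Proof.
have := mantel; have := Delta_le.
move: Delta Pn => x y hxy h.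
have : 4 * (x * (y - x)) <= y ^ 2.
  have [z ->] : exists z, y = x + z by exists (y - x); lia.
  rewrite addKn; case: (leqP x z) => hxz.
    have [w ->] : exists w, z = x + w by exists (z - x); lia.
    nia.
  have [w ->] : exists w, x = z + w by exists (x - z); lia.
  nia.
lia.
Qed.

Definition Q v u x y := ~~ Def v u x y && ~~ Def v x u y && ~~ Def v y u x.
Definition kk v u y := f v u (+) f u y (+) f v y.

Lemma Qrel v u x y : D4 v u x y -> Q v u x y ->
  f x y = f v x (+) f v y (+) kk v u y /\ kk v u x = kk v u y.
Proof.
move=> HD /andP [] /andP [] q1 q2 q3.
have h1 := ND HD q1.
have h2 := ND (etrans (esym (D4_23 _ _ _ _)) HD) q2.
have h3 := ND (etrans (esym (D4_cyc _ _ _ _)) HD) q3.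
rewrite -e4_23 in h2; rewrite -e4_cyc in h3.
rewrite /kk; move: h1 h2 h3; case: (e4 v u x y).
  by case: (f v u); case: (f x y); case: (f v x); case: (f u y); case: (f v y); case: (f u x).
by case: (f v u); case: (f x y); case: (f v x); case: (f u y); case: (f v y); case: (f u x).
Qed.

Lemma card_inter a b c d (g : pred V) : D4 a b c d ->
  #|[set a; b; c; d] :&: [set x | g x]| = count g [:: a; b; c; d].
Proof.
move=> HD.
have -> : [set a; b; c; d] :&: [set x | g x] = [set x in filter g [:: a; b; c; d]].
  by apply/setP => x; rewrite !inE mem_filter !inE -!orbA andbC.
by rewrite card_seqset ?size_filter // filter_uniq.
Qed.

Lemma correct_ok v u a b c d : uniq [:: v; u; a; b; c; d] -> ~~ Def a b c d ->
  Q v u a b -> Q v u c d -> Q v u b d -> correct E [set x | f v x] [set a; b; c; d].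
Proof.
move=> Hu Hdef Q1 Q2 Q3.
move: Hu; rewrite /= !inE !negb_or => Hu; splitall.
have Habcd : D4 a b c d by rewrite /D4 /= !inE !negb_or; repeat (apply/andP; split) => //.
have Hvab : D4 v u a b by rewrite /D4 /= !inE !negb_or; repeat (apply/andP; split) => //.
have Hvcd : D4 v u c d by rewrite /D4 /= !inE !negb_or; repeat (apply/andP; split) => //.
have Hvbd : D4 v u b d by rewrite /D4 /= !inE !negb_or; repeat (apply/andP; split) => //.
have he := ND Habcd Hdef.
have [hab _] := Qrel Hvab Q1.
have [hcd _] := Qrel Hvcd Q2.
have [_ hk] := Qrel Hvbd Q3.
rewrite /correct /good card_inter // -/(e4 a b c d) he hab hcd hk /=.
by case: (f v a); case: (f v b); case: (f v c); case: (f v d); case: (kk v u d).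
Qed.

Lemma Qsum : S4 (fun v u x y => (D4 v u x y && ~~ Q v u x y) : nat) <= 3 * Dn.
Proof.
apply: (@leq_trans (S4 (fun a b c d => (D4 a b c d && Def a b c d : nat)
   + (D4 a c b d && Def a c b d : nat) + (D4 a d b c && Def a d b c : nat)))).
  apply: S4_le => a b c d; rewrite (D4_23 a c b d) -(D4_cyc a b c d) /Q.
  by case: (D4 a b c d); case: (Def a b c d); case: (Def a c b d); case: (Def a d b c).
rewrite !S4_add.
have -> : S4 (fun a b c d => (D4 a c b d && Def a c b d : nat)) = Dn by rewrite /Dn [in RHS]S4_23.
have -> : S4 (fun a b c d => (D4 a d b c && Def a d b c : nat)) = Dn by rewrite /Dn [in RHS]S4_cyc.
rewrite -/Dn; lia.
Qed.

Definition Bq v u x y := (x != y) && ~~ (D4 v u x y && Q v u x y).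

Lemma Bq_bound v u : v != u ->
  S2 (fun x y => Bq v u x y : nat) <= 4 * n + S2 (fun x y => (D4 v u x y && ~~ Q v u x y) : nat).
Proof.
move=> hvu.
have h1 : S2 (fun x y => ((x == v) : nat) + (x == u) + (y == v) + (y == u)) = 4 * n.
  rewrite !S2_add /S2.
  have e1 : forall w, \sum_(a < n) \sum_(b < n) ((a == w) : nat) = n.
    move=> w; rewrite (eq_bigr (fun a => n * (a == w))) => [|a _]; last by rewrite sum_const_ord.
    by rewrite -big_distrr /= sum_eq1 muln1.
  have e2 : forall w, \sum_(a < n) \sum_(b < n) ((b == w) : nat) = n.
    by move=> w; rewrite (eq_bigr (fun a => 1)) => [|a _]; rewrite ?sum_eq1 // sum_const_ord muln1.
  by rewrite !e1 !e2; lia.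
rewrite -h1 -S2_add; apply: S2_le => x y; rewrite /Bq.
case: (boolP (D4 v u x y)) => HD; first by rewrite /=; lia.
case: (boolP (x != y)) => //= hxy.
move: HD; rewrite /D4 /= !inE (negbTE hvu) /= hxy (eq_sym v x) (eq_sym v y) (eq_sym u x) (eq_sym u y).
by case: (x == v); case: (x == u); case: (y == v); case: (y == u).
Qed.

Lemma leq_or4 (x a b c d : bool) : (x -> [|| a, b, c | d]) -> (x : nat) <= a + b + c + d.
Proof. by case: x; case: a; case: b; case: c; case: d => // /(_ isT). Qed.

Lemma incorrect_bound v u : v != u ->
  S4 (fun a b c d => (D4 a b c d && ([set a; b; c; d] \in incorrect_sets E [set x | f v x])) : nat)
  <= Dn + 3 * (n * n * S2 (fun x y => Bq v u x y : nat)).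
Proof.
move=> hvu.
apply: (@leq_trans (S4 (fun a b c d => (D4 a b c d && Def a b c d : nat)
   + (Bq v u a b : nat) + (Bq v u c d : nat) + (Bq v u b d : nat)))).
  apply: S4_le => a b c d; apply: leq_or4 => /andP [HD Hinc].
  rewrite HD /=.
  case: (boolP (Def a b c d)) => //= Hdef.
  case: (boolP (Bq v u a b)) => //= B1.
  case: (boolP (Bq v u c d)) => //= B2.
  case: (boolP (Bq v u b d)) => //= B3.
  have hab : a != b by move: HD; rewrite /D4 /= !inE !negb_or => H; splitall.
  have hcd : c != d by move: HD; rewrite /D4 /= !inE !negb_or => H; splitall.
  have hbd : b != d by move: HD; rewrite /D4 /= !inE !negb_or => H; splitall.
  move: B1 B2 B3; rewrite /Bq hab hcd hbd /= !negbK => /andP [D1 Q1] /andP [D2 Q2] /andP [D3 Q3].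
  have Hu : uniq [:: v; u; a; b; c; d].
    move: HD D1 D2; rewrite /D4 /= !inE !negb_or => H1 H2 H3; splitall.
    by repeat (apply/andP; split) => //.
  have := correct_ok Hu Hdef Q1 Q2 Q3.
  by move: Hinc; rewrite inE => /andP [_ /negP].
rewrite !S4_add.
have e1 : S4 (fun a b c d => Bq v u a b : nat) = n * n * S2 (fun x y => Bq v u x y : nat).
  by rewrite S4_pair.
have e2 : S4 (fun a b c d => Bq v u c d : nat) = S4 (fun a b c d => Bq v u a b : nat).
  by rewrite S4_swap.
have e3 : S4 (fun a b c d => Bq v u b d : nat) = S4 (fun a b c d => Bq v u a b : nat).
  by rewrite S4_23 S4_swap.
rewrite e2 e3 e1 -/Dn; lia.
Qed.

End Mantel.


Lemma Pn_eq : Pn = n * (n - 1).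
Proof.
rewrite /Pn /S2 (eq_bigr (fun a => n - 1)) ?sum_const_ord // => a _.
have : \sum_(b < n) (((a != b) : nat) + (b == a)) = n.
  rewrite (eq_bigr (fun _ => 1)) ?sum_const_ord ?muln1 // => b _.
  by rewrite (eq_sym b a); case: (a == b).
rewrite big_split /= sum_eq1 => h; by rewrite -[X in _ = X - 1]h addnK.
Qed.

Lemma avg (H : V -> V -> nat) K : S2 H <= K -> (forall v, H v v = 0) -> 0 < Pn ->
  exists v u, v != u /\ Pn * H v u <= K.
Proof.
move=> HS Hd HP.
case: (boolP [exists v, exists u, (v != u) && (Pn * H v u <= K)]).
  by case/existsP => v /existsP [u /andP [h1 h2]]; exists v, u.
rewrite negb_exists => /forallP Hn; exfalso.
have : Pn * K.+1 <= Pn * S2 H.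
  have e1 : Pn * K.+1 = S2 (fun v u => ((v != u) : nat) * K.+1) by rewrite S2_mulr mulnC.
  have e2 : Pn * S2 H = S2 (fun v u => H v u * Pn) by rewrite S2_mulr mulnC.
  rewrite e1 e2; apply: S2_le => v u.
  case: (eqVneq v u) => [->|hvu]; first by rewrite Hd.
  have := Hn v; rewrite negb_exists => /forallP /(_ u); rewrite hvu /= -ltnNge => h.
  by rewrite mul1n mulnC.
have := leq_mul (leqnn Pn) HS.
move: (Pn * S2 H) => x; nia.
Qed.

Lemma key (HU : uniform4 E) (n2 : 1 < n) :
  exists V1, 2 * #|incorrect_sets E V1| + 2736 * #|E| <= 57 * n ^ 4 + 24 * n ^ 3.
Proof.
have n0 : 0 < n by apply: ltnW.
pose i0 : V * V := (Ordinal n0, Ordinal n0).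
have [[p q] _ Hmax'] := @arg_maxnP _ i0 xpredT (fun t => deg t.1 t.2) isT.
have Hmax : forall a b, deg a b <= deg p q by move=> a b; apply: (Hmax' (a, b)).
have HP : 0 < Pn by rewrite Pn_eq muln_gt0 n0 subn_gt0.
have Hdiag : forall w, \sum_(x < n) \sum_(y < n) ((D4 w w x y && ~~ Q p q w w x y) : nat) = 0.
  by move=> w; rewrite big1 // => x _; rewrite big1 // => y _; rewrite /D4 /= inE eqxx.
have [v [u [hvu Hvu]]] := @avg (fun v u => \sum_(x < n) \sum_(y < n)
    ((D4 v u x y && ~~ Q p q v u x y) : nat)) (3 * Dn p q) (Qsum p q) Hdiag HP.
exists [set x | f p q v x].
set inc := incorrect_sets E _.
have I1 : 24 * #|inc| = S4 (fun a b c d => (D4 a b c d && ([set a; b; c; d] \in inc)) : nat).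
  by rewrite S4_count // => S; rewrite inE => /andP [/eqP ->].
have I2 := incorrect_bound p q hvu.
have I3 := Bq_bound p q hvu.
have I5 := mantel2 Hmax.
rewrite M_eq // in I5.
rewrite -/inc -I1 in I2.
move: I2 I3 I5 Hvu; rewrite Pn_eq.
set SB := S2 _; set SQ := S2 _; set Dn0 := Dn p q; set H0 := \sum_(x < n) _.
have -> : H0 = SQ by [].
move=> I2 I3 I5 I4.
have J1 : n * n * SB <= n * n * (4 * n) + n * n * SQ by rewrite -mulnDr leq_mul.
have J2 : n * n * SQ <= 2 * (n * (n - 1) * SQ).
  rewrite mulnA leq_mul2r; apply/orP; right; nia.
have J3 : (n * (n - 1)) ^ 2 <= n ^ 4.
  rewrite -[4]/(2 * 2) expnM leq_exp2r //.
  by rewrite expnS expn1 leq_mul2l leq_subr orbT.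
have J4 : n * n * (4 * n) = 4 * n ^ 3 by rewrite !expnS expn0; nia.
clear I3 I1 Hdiag Hmax Hmax' HP.
move: I2 I5 I4 J1 J2 J3 J4.
move: (n * n * SB) (n * n * SQ) (n * (n - 1) * SQ) ((n * (n - 1)) ^ 2) (n ^ 4) (n ^ 3) (n * n * (4 * n)) => A B C P2 N4 N3 N43.
move: #|inc| #|E| Dn0 => x y z.
lia.
Qed.

End Main.

Import Order.TTheory GRing.Theory Num.Theory.
Local Open Scope ring_scope.

Theorem theorem3 (R : realType) (eps : R) : 0 < eps ->
  exists eta : R, 0 < eta /\
  exists N : nat, forall n : nat, (N <= n)%N ->
  forall E : {set {set 'I_n}}, uniform4 E -> ~ contains_C3 E ->
    (bmax n)%:R - eta * n%:R ^+ 4 < #|E|%:R ->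
    exists V1 : {set 'I_n}, #|incorrect_sets E V1|%:R <= eps * n%:R ^+ 4.
Proof.
move=> heps.
exists (eps / 2736); split; first by rewrite divr_gt0.
exists (maxn 2 (Num.truncn (423 / eps)).+1) => n hN E HU HC Hb.
have n2 : (1 < n)%N by move: hN; rewrite geq_max => /andP [].
have [V1 HV] := key HC HU n2.
exists V1.
have hB := bmax_lb n.
have hT : 423 / eps < n%:R.
  apply: (lt_le_trans (truncnS_gt _)); rewrite ler_nat.
  by move: hN; rewrite geq_max => /andP [].
rewrite ltr_pdivrMr // in hT.
set x := n%:R in hT *.
have x0 : 0 <= x by rewrite /x ler0n.
have x1 : 1 <= x by rewrite /x ler1n; apply: ltnW.
have h3 : x ^+ 2 <= x ^+ 3 by rewrite !exprS expr0 !mulr1 ler_peMl // mulr_ge0.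
have h5 : 423 * x ^+ 3 <= eps * x ^+ 4.
  have : 423 * x ^+ 3 <= (x * eps) * x ^+ 3.
    by rewrite ler_wpM2r ?exprn_ge0 // ltW.
  by move=> h; apply: le_trans h _; rewrite [x * eps]mulrC -mulrA -exprS.
have hV : (2 * #|incorrect_sets E V1| + 2736 * #|E| <= 57 * n ^ 4 + 24 * n ^ 3)%N by [].
have hV' : ((2 * #|incorrect_sets E V1| + 2736 * #|E|)%N%:R <= (57 * n ^ 4 + 24 * n ^ 3)%N%:R :> R) by rewrite ler_nat.
have hB' : ((n ^ 4)%N%:R <= (48 * bmax n + 6 * n ^ 3 + n ^ 2)%N%:R :> R) by rewrite ler_nat.
have e4 : (n ^ 4)%:R = x ^+ 4 :> R by rewrite natrX.
have e3 : (n ^ 3)%:R = x ^+ 3 :> R by rewrite natrX.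
have e2 : (n ^ 2)%:R = x ^+ 2 :> R by rewrite natrX.
have hV2 : 2 * #|incorrect_sets E V1|%:R + 2736 * #|E|%:R <= 57 * x ^+ 4 + 24 * x ^+ 3 :> R.
  by rewrite -e4 -e3 -!natrM -!natrD ler_nat.
have hB2 : x ^+ 4 <= 48 * (bmax n)%:R + 6 * x ^+ 3 + x ^+ 2 :> R.
  by rewrite -e4 -e3 -e2 -!natrM -!natrD ler_nat.
rewrite -/x in Hb.
have eA : eps / 2736 * x ^+ 4 = (eps * x ^+ 4) / 2736 by rewrite mulrAC.
rewrite eA in Hb.
move: hV2 hB2 Hb h3 h5; clear.
move: (eps * x ^+ 4) (x ^+ 4) (x ^+ 3) (x ^+ 2) (#|incorrect_sets E V1|%:R) (#|E|%:R) ((bmax n)%:R) => EX X4 X3 X2 I e b.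
move=> *.
lra.
Qed.
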